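(* Let $0<\mu<L_{\max}^{-1}$ with $L_{\max}=\max_i\|A_i\|_2^2$, and let $\{x^n\}$ be generated by GAITA (as in the context) from an arbitrary $x^0\in\mathbf{R}^N$. Then $\{x^n\}$ has a convergent subsequence. Moreover, the set $\mathcal{L}$ of limit points of $\{x^n\}$ is closed and connected.
   Context: Let $A\in\mathbf{R}^{m\times N}$ have columns $A_1,\dots,A_N$, $y\in\mathbf{R}^m$, $\lambda>0$, $q\in(0,1)$, and $T_\lambda(x)=\frac12\|Ax-y\|_2^2+\lambda\sum_{i=1}^N|x_i|^q$. For a step size $\mu>0$ set $\tau_{\mu,q}=\frac{2-q}{2-2q}(2\lambda\mu(1-q))^{\frac{1}{2-q}}$ and $\eta_{\mu,q}=(2\lambda\mu(1-q))^{\frac{1}{2-q}}$. For $z\in\mathbf{R}$ let $prox_{\mu,\lambda|\cdot|^q}(z)=\arg\min_{v\in\mathbf{R}}\{\frac{(z-v)^2}{2\mu}+\lambda|v|^q\}$ (a single point when $|z|\neq\tau_{\mu,q}$). Define $\mathcal{T}(z,w)$ as the unique element of $prox_{\mu,\lambda|\cdot|^q}(z)$ if $|z|\neq\tau_{\mu,q}$, and, if $|z|=\tau_{\mu,q}$, as $sgn(z)\eta_{\mu,q}$ when $w\neq0$ and $0$ when $w=0$ ($sgn(0)=0$). GAITA: given $x^0\in\mathbf{R}^N$, for $n=0,1,2,\dots$ let $i=(n\bmod N)+1$, $z_i^n=x_i^n-\mu A_i^T(Ax^n-y)$, $x_i^{n+1}=\mathcal{T}(z_i^n,x_i^n)$,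 $x_j^{n+1}=x_j^n$ for $j\neq i$. *)

(* Defs.v *)
From HB Require Import structures.
From mathcomp Require Import all_boot all_order all_algebra.
From mathcomp Require Import all_classical all_reals all_analysis.
Set Implicit Arguments. Unset Strict Implicit. Unset Printing Implicit Defensive.
Import Order.TTheory GRing.Theory Num.Theory.
Import numFieldNormedType.Exports.
Local Open Scope ring_scope.
Local Open Scope classical_set_scope.

Section GAITA.
Variable R : realType.

Definition col_sqnorm m N (A : 'M[R]_(m, N)) (i : 'I_N) : R :=
  \sum_(k < m) (A k i) ^+ 2.

Definition Lmax m N (A : 'M[R]_(m, N)) : R :=
  \big[Num.max/0]_(i < N) col_sqnorm A i.

(* the scalar penalty |v|^q (powR, with 0 `^ q = 0 for q <> 0) *)
Definition penal (q v : R) : R := `|v| `^ q.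

Definition prox (mu lam q z : R) : set R :=
  [set v | forall w : R,
     (z - v) ^+ 2 / (2 * mu) + lam * penal q v
       <= (z - w) ^+ 2 / (2 * mu) + lam * penal q w].

Definition tau (mu lam q : R) : R :=
  (2 - q) / (2 - 2 * q) * (2 * lam * mu * (1 - q)) `^ (1 / (2 - q)).

Definition eta (mu lam q : R) : R :=
  (2 * lam * mu * (1 - q)) `^ (1 / (2 - q)).

(* v = T(z, w): the unique prox point if |z| <> tau; the tie-breaking
   rule otherwise. *)
Definition Tmap_rel (mu lam q z w v : R) : Prop :=
  (`|z| != tau mu lam q -> prox mu lam q z v) /\
  (`|z| = tau mu lam q ->
     v = if w != 0 then Num.sg z * eta mu lam q else 0).

Definition zcoord m N (A : 'M[R]_(m, N)) (y : 'cV[R]_m) (mu : R)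
  (x : 'cV[R]_N) (i : 'I_N) : R :=
  x i 0 - mu * \sum_(k < m) A k i * ((A *m x) k 0 - y k 0).

(* x is a GAITA sequence: at step n the coordinate i = n mod N (0-based)
   is updated, all other coordinates are kept. *)
Definition is_GAITA m N (A : 'M[R]_(m, N)) (y : 'cV[R]_m) (lam q mu : R)
  (x : nat -> 'cV[R]_N) : Prop :=
  forall (n : nat) (j : 'I_N),
    (((j : nat) = n %% N)%N ->
        Tmap_rel mu lam q (zcoord A y mu (x n) j) (x n j 0) (x n.+1 j 0)) /\
    (((j : nat) <> n %% N)%N -> x n.+1 j 0 = x n j 0).

Definition limit_points N (x : nat -> 'cV[R]_N) : set 'cV[R]_N :=
  [set p : 'cV[R]_N | exists phi : nat -> nat, (forall n, (phi n < phi n.+1)%N) /\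
                                    (x \o phi) @ \oo --> p].

End GAITA.

(* Main.v *)
Require Import Defs.
From HB Require Import structures.
From mathcomp Require Import all_boot all_order all_algebra.
From mathcomp Require Import all_classical all_reals all_analysis.
From mathcomp Require Import ring lra.
Import Order.TTheory GRing.Theory Num.Theory.
Import numFieldNormedType.Exports.
Local Open Scope ring_scope.
Local Open Scope classical_set_scope.
Section A.
Variable R : realType.
Lemma bern (u p : R) : 0 < u -> p <= 0 -> 1 + p * (u - 1) <= u `^ p.
Proof.
move=> u0 p0.
have -> : u `^ p = expR (p * ln u) by rewrite /powR gt_eqF.
have h1 := expR_ge1Dx (p * ln u).
have h2 := expR_ge1Dx (ln u); rewrite lnK ?posrE // in h2.
have : p * (u - 1) <= p * ln u by rewrite ler_wnM2l //; lra.
lra.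
Qed.

Section Tie.
Variables (lam q mu : R).
Hypotheses (hl : 0 < lam) (hq0 : 0 < q) (hq1 : q < 1) (hmu : 0 < mu).
Let c := 2 * lam * mu * (1 - q).
Let et := Defs.eta mu lam q.
Ltac H := have hl' := hl; have hq0' := hq0; have hq1' := hq1; have hmu' := hmu.
Lemma c_gt0 : 0 < c. Proof. H. rewrite /c; have h1 : 0 < 1 - q by lra. have h2 : 0 < lam * mu by apply: mulr_gt0. rewrite -mulrA (mulrC 2) -!mulrA; apply: mulr_gt0 => //; apply: mulr_gt0 => //; apply: mulr_gt0 => //. Qed.
Lemma et_gt0 : 0 < et. Proof. H. exact: powR_gt0 c_gt0. Qed.
Lemma tauE : tau mu lam q = (2 - q) / (2 - 2 * q) * et. Proof. H. by []. Qed.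
Lemma etE : lam * mu * et `^ (q - 1) = et / (2 * (1 - q)).
Proof. H.
have e1 : et `^ (2 - q) = c.
  rewrite /et /Defs.eta -powRrM (_ : 1 / (2 - q) * (2 - q) = 1); last by field; lra.
  by rewrite powRr1 //; exact/ltW/c_gt0.
have e2 : et `^ (q - 1) * c = et.
  rewrite -e1 -powRD; last by rewrite (gt_eqF et_gt0) implybT.
  by rewrite (_ : q - 1 + (2 - q) = 1) ?powRr1 ?(ltW et_gt0) //; lra.
have cn : c != 0 by rewrite gt_eqF // c_gt0.
rewrite -{2}e2 /c; field; lra.
Qed.

Lemma key (s : R) : 0 < s -> tau mu lam q <= s / 2 + lam * mu * s `^ (q - 1).
Proof. H.
move=> s0.
have e0 := et_gt0.
have -> : s `^ (q - 1) = et `^ (q - 1) * (s / et) `^ (q - 1).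
  rewrite -powRM ?(ltW e0) ?divr_ge0 ?(ltW e0) ?(ltW s0) //.
  by rewrite mulrC divfK // gt_eqF.
have b := @bern (s / et) (q - 1) (divr_gt0 s0 e0).
rewrite mulrA etE tauE.
have hK : 0 < et / (2 * (1 - q)) by apply: divr_gt0 => //; lra.
have := ler_wpM2l (ltW hK) (b ltac:(lra)).
have -> : et / (2 * (1 - q)) * (1 + (q - 1) * (s / et - 1)) =
          (2 - q) / (2 - 2 * q) * et - s / 2.
  field; rewrite gt_eqF //; lra.
lra.
Qed.

Lemma key_eq : et / 2 + lam * mu * et `^ (q - 1) = tau mu lam q.
Proof. H. rewrite etE tauE; field; lra. Qed.

Lemma penal0 : penal q 0 = 0.
Proof. H. by rewrite /penal normr0 powR0 // gt_eqF. Qed.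

Lemma penalE (w : R) : penal q w = `|w| * `|w| `^ (q - 1).
Proof. H. by rewrite /penal mulr_powRB1. Qed.

Lemma h0_le (z w : R) : `|z| = tau mu lam q ->
  (z - 0) ^+ 2 / (2 * mu) + lam * penal q 0 <= (z - w) ^+ 2 / (2 * mu) + lam * penal q w.
Proof. H.
move=> hz; rewrite penal0 mulr0 addr0 subr0.
have [->|wn] := eqVneq w 0; first by rewrite subr0 penal0 mulr0 addr0.
have s0 : 0 < `|w| by rewrite normr_gt0.
have k := @key `|w| s0.
rewrite penalE.
set P := `|w| `^ (q - 1) in k *.
have zw : z * w <= tau mu lam q * `|w| by rewrite -hz -normrM ler_norm.
have w2 : w ^+ 2 = `|w| ^+ 2 by rewrite real_normK // num_real.
have : 0 <= (w ^+ 2 - 2 * z * w + 2 * mu * lam * (`|w| * P)) / (2 * mu).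
  apply: divr_ge0; last lra.
  rewrite w2.
  have : 0 <= `|w| * (`|w| / 2 + lam * mu * P - tau mu lam q) by apply: mulr_ge0; lra.
  nra.
have -> : (w ^+ 2 - 2 * z * w + 2 * mu * lam * (`|w| * P)) / (2 * mu) =
   (z - w) ^+ 2 / (2 * mu) + lam * (`|w| * P) - z ^+ 2 / (2 * mu).
  field; lra.
lra.
Qed.

Lemma hv0_eq (z : R) : `|z| = tau mu lam q ->
  (z - Num.sg z * et) ^+ 2 / (2 * mu) + lam * penal q (Num.sg z * et)
  = (z - 0) ^+ 2 / (2 * mu) + lam * penal q 0.
Proof. H.
move=> hz.
have e0 := et_gt0.
have zn : z != 0.
  apply/eqP => z0; move: hz; rewrite z0 normr0 tauE => h.
  have : 0 < (2 - q) / (2 - 2 * q) * et by apply: mulr_gt0 => //; apply: divr_gt0; lra.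
  lra.
have nv : `|Num.sg z * et| = et by rewrite normrM normr_sg zn mul1r gtr0_norm.
rewrite penalE nv penal0 mulr0 addr0 subr0.
have ke := key_eq.
have zv : z * (Num.sg z * et) = tau mu lam q * et by rewrite mulrA (mulrC z) -normrEsg hz.
have v2 : (Num.sg z * et) ^+ 2 = et ^+ 2.
  by rewrite exprMn sqr_sg zn mul1r.
set v := Num.sg z * et in zv v2 *.
set E := et `^ (q - 1) in ke *.
have -> : (z - v) ^+ 2 / (2 * mu) = z ^+ 2 / (2 * mu) + (v ^+ 2 - 2 * (z * v)) / (2 * mu).
  field; lra.
rewrite v2 zv.
have -> : (et ^+ 2 - 2 * (tau mu lam q * et)) / (2 * mu) = - (lam * (et * E)).
  rewrite -ke; field; lra.
lra.
Qed.

Lemma tie_prox (z : R) : `|z| = tau mu lam q ->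
  prox mu lam q z 0 /\ prox mu lam q z (Num.sg z * et).
Proof. H.
move=> hz; split => w.
  exact: h0_le.
by rewrite hv0_eq //; exact: h0_le.
Qed.

End Tie.
End A.
Section D.
Variable R : realType.
Variables (m N : nat) (A : 'M[R]_(m, N)) (y : 'cV[R]_m) (lam q mu : R).

Definition res (x : 'cV[R]_N) (k : 'I_m) : R := (A *m x) k 0 - y k 0.
Definition Fobj (x : 'cV[R]_N) : R :=
  (\sum_k res x k ^+ 2) / 2 + lam * \sum_j penal q (x j 0).

Lemma col_le (i : 'I_N) : col_sqnorm A i <= Lmax A.
Proof. exact: (le_bigmax _ (fun j => col_sqnorm A j)). Qed.

Lemma step (x x' : 'cV[R]_N) (i : 'I_N) :
  0 < mu ->
  (forall j, j != i -> x' j 0 = x j 0) ->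
  prox mu lam q (zcoord A y mu x i) (x' i 0) ->
  Fobj x' + (1 / (2 * mu) - Lmax A / 2) * (x' i 0 - x i 0) ^+ 2 <= Fobj x.
Proof.
move=> hmu hj hp.
set t := x' i 0 - x i 0.
have hr : forall k, res x' k = res x k + A k i * t.
  move=> k; rewrite /res !mxE (bigD1 i) //= [X in _ = X - _ + _](bigD1 i) //=.
  rewrite (eq_bigr (fun j => A k j * x j 0)); last by move=> j /hj ->.
  rewrite /t; ring.
set g := \sum_k A k i * res x k.
have hs : \sum_k res x' k ^+ 2 = \sum_k res x k ^+ 2 + 2 * t * g + t ^+ 2 * col_sqnorm A i.
  rewrite (eq_bigr (fun k => res x k ^+ 2 + 2 * t * (A k i * res x k) + t ^+ 2 * A k i ^+ 2)); last first.
    by move=> k _; rewrite hr; ring.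
  by rewrite !big_split /= -!mulr_sumr.
have hpen : \sum_j penal q (x' j 0) = \sum_j penal q (x j 0) - penal q (x i 0) + penal q (x' i 0).
  rewrite (bigD1 i) //= [X in _ = X - _ + _](bigD1 i) //=.
  rewrite (eq_bigr (fun j => penal q (x j 0))); last by move=> j /hj ->.
  ring.
have hz := hp (x i 0).
rewrite /zcoord -/g in hz.
have e : (x i 0 - mu * g - x' i 0) ^+ 2 / (2 * mu) - (x i 0 - mu * g - x i 0) ^+ 2 / (2 * mu)
   = t ^+ 2 / (2 * mu) + t * g.
  rewrite /t; field; rewrite gt_eqF //.
have hL := col_le i.
have t2 : 0 <= t ^+ 2 := sqr_ge0 t.
have : t ^+ 2 * col_sqnorm A i <= t ^+ 2 * Lmax A by exact: ler_wpM2l.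
rewrite /Fobj hs hpen.
move: hz e; rewrite -/t.
set P1 := penal q (x' i 0); set P0 := penal q (x i 0).
set a := (x i 0 - mu * g - x' i 0) ^+ 2 / (2 * mu).
set b := (x i 0 - mu * g - x i 0) ^+ 2 / (2 * mu).
set u := t ^+ 2 / (2 * mu).
move=> hz e hm.
have -> : (1 / (2 * mu) - Lmax A / 2) * t ^+ 2 = u - t ^+ 2 * Lmax A / 2 by rewrite /u; field; rewrite gt_eqF.
lra.
Qed.
End D.
Lemma ev (P : nat -> Prop) : (\forall n \near \oo, P n) <-> exists K, forall n, (K <= n)%N -> P n.
Proof.
split.
  by move=> [K _ hK]; exists K => n hn; exact: hK.
by move=> [K hK]; exists K => // n /= hn; exact: hK.
Qed.

Fixpoint mkphi (f : nat * nat -> nat) (k : nat) : nat :=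
  match k with 0 => f (0, 0)%N | k'.+1 => f (k'.+1, (mkphi f k').+1) end.

Lemma inc_ge (phi : nat -> nat) : (forall n, (phi n < phi n.+1)%N) -> forall n, (n <= phi n)%N.
Proof. move=> h; elim=> // n IH; exact: leq_ltn_trans IH (h n). Qed.

Section Topo.
Variables (R : realType) (N : nat).

Lemma entry_le (v : 'cV[R]_N) i j : `|v i j| <= `|v|.
Proof.
rewrite [X in _ <= X]/Num.norm /= mx_normrE.
exact: (le_bigmax _ (fun ij : 'I_N * 'I_1 => `|v ij.1 ij.2|) (i, j)).
Qed.

Definition FN (x : nat -> 'cV[R]_N) (p : 'cV[R]_N) :=
  forall e, 0 < e -> forall K, exists n, (K <= n)%N /\ `|x n - p| < e.

Lemma LP_FN {x : nat -> 'cV[R]_N} {p} : limit_points x p -> FN x p.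
Proof.
move=> [phi [hinc /cvgrPdistC_lt hc]] e e0 K.
have /ev [K0 hK0] := hc e e0.
exists (phi (maxn K K0)); split.
  exact: leq_trans (leq_maxl K K0) (@inc_ge _ hinc _).
exact: (hK0 _ (leq_maxr K K0)).
Qed.

Lemma FN_LP (x : nat -> 'cV[R]_N) p : FN x p -> limit_points x p.
Proof.
move=> h.
have : forall kK : nat * nat, exists n, (kK.2 <= n)%N /\ `|x n - p| < kK.1.+1%:R^-1.
  by move=> [k K]; apply: h.
move=> /choice [f hf].
exists (mkphi f); split.
  by move=> n /=; have [+ _] := hf (n.+1, (mkphi f n).+1).
apply/cvgrPdistC_lt => e e0.
have hb : forall k, `|x (mkphi f k) - p| < k.+1%:R^-1.
  by case=> [|k] /=; [have [_ ->] := hf (0, 0)%N | have [_ ->] := hf (k.+1, (mkphi f k).+1)%N].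
have := @near_infty_natSinv_lt R (PosNum e0).
apply: filterS => k /= hk.
exact: lt_trans (hb k) hk.
Qed.

Lemma LP_closed (x : nat -> 'cV[R]_N) : closed (limit_points x).
Proof.
move=> p hp; apply: FN_LP => e e0 K.
have e2 : 0 < e / 2 by apply: divr_gt0.
have [q [Lq bq]] := hp (ball p (e / 2)) (nbhsx_ballx p (e / 2) e2).
move: bq; rewrite -ball_normE /= => bq.
have [n [Kn hn]] := LP_FN Lq (e / 2) e2 K.
exists n; split => //.
apply: le_lt_trans (ler_distD q _ _) _.
rewrite (distrC q p); lra.
Qed.


Lemma trmx_cont : continuous (@trmx R 1 N).
Proof.
move=> v B /nbhs_ballP [e e0 hB]; apply/nbhs_ballP; exists e => // w [_ h].
apply: hB; split => // i j; rewrite !mxE; exact: h.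
Qed.

Lemma BW (x : nat -> 'cV[R]_N) M : (forall n i j, `|x n i j| <= M) -> exists p, FN x p.
Proof.
move=> hM.
set K' := [set r : 'rV[R]_N | forall i, (fun=> `[- M, M]%classic) i (r ord0 i)].
have cK' : compact K' by apply: rV_compact => _; exact: segment_compact.
have cK : compact (trmx @` K').
  by apply: continuous_compact => //; apply: continuous_subspaceT; exact: trmx_cont.
have FK : (x @ \oo) (trmx @` K').
  apply/ev; exists 0%N => n _; exists (trmx (x n)); last exact: trmxK.
  by move=> i /=; rewrite in_itv /= mxE -ler_norml.
have [p [_ cp]] := cK _ _ FK.
exists p => e e0 K0.
have FA : (x @ \oo) [set v | exists n, (K0 <= n)%N /\ v = x n].
  by apply/ev; exists K0 => n hn; exists n.
have [v [[n [hn ->]] bv]] := cp _ _ FA (nbhsx_ballx p e e0).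
exists n; split => //; move: bv; by rewrite -ball_normE /= distrC.
Qed.

Lemma FN_bound (x : nat -> 'cV[R]_N) M p : (forall n i j, `|x n i j| <= M) ->
  FN x p -> forall i j, `|p i j| <= M.
Proof.
move=> hM hp i j; rewrite leNgt; apply/negP => h.
have e0 : 0 < `|p i j| - M by lra.
have [n [_ hn]] := hp _ e0 0%N.
have h1 := entry_le (x n - p) i j; rewrite !mxE in h1.
have h2 := ler_normB (x n i j) (x n i j - p i j).
have ee : x n i j - (x n i j - p i j) = p i j by ring.
rewrite ee in h2.
have := hM n i j.
lra.
Qed.
Arguments FN_bound {x M p}.


Lemma closed_FN (B : set 'cV[R]_N) (u : nat -> 'cV[R]_N) q :
  closed B -> (forall k, B (u k)) -> FN u q -> B q.
Proof.
move=> cB hB hq; apply: cB => S /nbhs_ballP [e e0 hS].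
have [n [_ hn]] := hq e e0 0%N.
exists (u n); split => //; apply: hS; rewrite -ball_normE /= distrC //.
Qed.
Arguments closed_FN {B u q}.


Lemma crossing (P : nat -> Prop) a k : P a -> ~ P (a + k)%N ->
  exists n, (a <= n)%N /\ P n /\ ~ P n.+1.
Proof.
move=> Pa; elim: k => [|k IH]; first by rewrite addn0.
move=> hn; case: (pselect (P (a + k)%N)) => hk.
  by exists (a + k)%N; split; [exact: leq_addr|split => //; rewrite -addnS].
exact: IH.
Qed.
Arguments crossing {P a k}.


Lemma nearA (x : nat -> 'cV[R]_N) M : (forall n i j, `|x n i j| <= M) ->
  forall d, 0 < d -> exists K, forall n, (K <= n)%N -> exists a, FN x a /\ `|x n - a| < d.
Proof.
move=> hM d d0; case: (pselect (exists K, forall n, (K <= n)%N -> exists a, FN x a /\ `|x n - a| < d)) => // hno.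
exfalso.
have : forall K, exists n, (K <= n)%N /\ forall a, FN x a -> d <= `|x n - a|.
  move=> K; apply: contrapT => hK; apply: hno; exists K => n hn.
  apply: contrapT => hna; apply: hK; exists n; split => // a La.
  rewrite leNgt; apply/negP => hlt; apply: hna; by exists a.
move=> H; have [f hf] := choice H.
have [q hq] := @BW (fun k => x (f k)) M (fun k => hM (f k)).
have Lq : FN x q.
  move=> e e0 K; have [k [hk he]] := hq e e0 K.
  by exists (f k); split => //; apply: leq_trans hk (proj1 (hf k)).
have [k [_ hk]] := hq d d0 0%N.
have := (proj2 (hf k)) q Lq.
lra.
Qed.
Arguments nearA {x M}.


Lemma sep (x : nat -> 'cV[R]_N) M (B D : set 'cV[R]_N) :
  (forall n i j, `|x n i j| <= M) -> closed B -> closed D ->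
  (forall u, B u -> FN x u) -> (forall q, B q -> D q -> False) ->
  exists e, 0 < e /\ forall u w, B u -> D w -> 3 * e <= `|u - w|.
Proof.
move=> hM cB cD BL BD.
case: (pselect (exists e, 0 < e /\ forall u w, B u -> D w -> 3 * e <= `|u - w|)) => // hno.
exfalso.
have : forall k : nat, exists uw : 'cV[R]_N * 'cV[R]_N,
    B uw.1 /\ D uw.2 /\ `|uw.1 - uw.2| < k.+1%:R^-1.
  move=> k; apply: contrapT => hk; apply: hno.
  exists (k.+1%:R^-1 / 3); split; first by apply: divr_gt0.
  move=> u w Bu Dw; rewrite leNgt; apply/negP => hlt; apply: hk.
  exists (u, w); split => //; split => //.
  have -> : k.+1%:R^-1 = 3 * (k.+1%:R^-1 / 3 : R) by field.
  exact: hlt.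
move=> H; have [f hf] := choice H.
have hMU : forall k i j, `|(f k).1 i j| <= M.
  by move=> k i j; apply: (FN_bound hM); apply: BL; exact: (proj1 (hf k)).
have [q hq] := @BW (fun k => (f k).1) M hMU.
have Bq : B q by apply: (closed_FN cB _ hq) => k; exact: (proj1 (hf k)).
have Dq : D q.
  apply: (closed_FN cD (u := fun k => (f k).2)); first by move=> k; exact: (proj1 (proj2 (hf k))).
  move=> e e0 K.
  have e2 : 0 < e / 2 by apply: divr_gt0.
  have /ev [K1 hK1] := @near_infty_natSinv_lt R (PosNum e2).
  have [k [hk he]] := hq _ e2 (maxn K K1).
  exists k; split; first exact: leq_trans (leq_maxl _ _) hk.
  have h1 := hK1 k (leq_trans (leq_maxr _ _) hk).
  have h2 := proj2 (proj2 (hf k)).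
  apply: le_lt_trans (ler_distD (f k).1 _ _) _.
  rewrite distrC /=; simpl in h1, he; move: h1 h2; set r := k.+1%:R^-1 => h1 h2; lra.
exact: BD Bq Dq.
Qed.
Arguments sep {x M B D}.


Lemma conn (x : nat -> 'cV[R]_N) M : (forall n i j, `|x n i j| <= M) ->
  (forall e, 0 < e -> exists K, forall n, (K <= n)%N -> `|x n.+1 - x n| < e) ->
  connected (limit_points x).
Proof.
move=> hM hstep B [b Bb] [U oU BE] [C cC BE2].
apply/seteqP; split; first by rewrite BE; apply: subIsetl.
move=> p Lp; apply: contrapT => nBp.
set L := limit_points x.
set D := L `&` ~` U.
have cB : closed B by rewrite BE2; apply: closedI => //; exact: LP_closed.
have cD : closed D by apply: closedI; [exact: LP_closed | exact: open_closedC].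
have BL : forall u, B u -> FN x u by move=> u; rewrite BE => -[/LP_FN].
have BD : forall q, B q -> D q -> False by move=> q; rewrite BE => -[_ Uq] [_ /(_ Uq)].
have Dp : D p by split => // Up; apply: nBp; rewrite BE.
have [e [e0 he]] := sep hM cB cD BL BD.
have [N1 hN1] := hstep e e0.
have [N2 hN2] := nearA hM e e0.
set N0 := maxn N1 N2.
set nb := fun n => exists u, B u /\ `|x n - u| < e.
have both : forall n, (N0 <= n)%N -> ~ nb n -> exists w, D w /\ `|x n - w| < e.
  move=> n hn nbn; have [a [La ha]] := hN2 n (leq_trans (leq_maxr _ _) hn).
  case: (pselect (U a)) => Ua.
    by exfalso; apply: nbn; exists a; split => //; rewrite BE; split => //; exact: FN_LP.
  by exists a; split => //; split => //; exact: FN_LP.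
have Lb : L b by move: Bb; rewrite BE => -[].
have [n1 [hn1 hb1]] := LP_FN Lb e e0 N0.
have [n2 [hn2 hp2]] := LP_FN Lp e e0 n1.
have nb1 : nb n1 by exists b.
have nb2 : ~ nb (n1 + (n2 - n1))%N.
  rewrite subnKC // => -[u [Bu hu]].
  have := he u p Bu Dp.
  have := ler_distD (x n2) u p.
  rewrite (distrC u (x n2)); lra.
have [n [hn [nbn nbn1]]] := crossing nb1 nb2.
have [u [Bu hu]] := nbn.
have [w [Dw hw]] := both n.+1 (leq_trans hn1 (leq_trans hn (leqnSn n))) nbn1.
have hs := hN1 n (leq_trans (leq_maxl _ _) (leq_trans hn1 hn)).
have := he u w Bu Dw.
have := ler_distD (x n) u w.
have := ler_distD (x n.+1) (x n) w.
rewrite (distrC u (x n)).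
rewrite (distrC (x n) (x n.+1)); lra.
Qed.
End Topo.

Arguments Fobj {R m N} A y lam q x.
Arguments step {R m N} A y lam q mu x x' i.
Arguments res {R m N} A y x k.

Section Main.
Variables (R : realType) (m N : nat) (A : 'M[R]_(m, N)) (y : 'cV[R]_m)
  (lam q mu : R) (x : nat -> 'cV[R]_N).
Hypotheses (hl : 0 < lam) (hq0 : 0 < q) (hq1 : q < 1) (hmu : 0 < mu)
  (hL : mu * Lmax A < 1) (hG : is_GAITA A y lam q mu x).

Ltac H := have hl' := hl; have hq0' := hq0; have hq1' := hq1; have hmu' := hmu; have hL' := hL.

Lemma gprox z w v : Tmap_rel mu lam q z w v -> prox mu lam q z v.
Proof.
move=> [h1 h2]; case: (eqVneq `|z| (tau mu lam q)) => hz; last exact: h1.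
have [p0 pe] := @tie_prox R lam q mu hl hq0 hq1 hmu z hz.
by rewrite (h2 hz); case: ifP => _.
Qed.

Let dl := 1 / (2 * mu) - Lmax A / 2.
Lemma dl_gt0 : 0 < dl.
Proof. H.
have -> : dl = (1 - mu * Lmax A) / (2 * mu) by rewrite /dl; field; rewrite gt_eqF.
apply: divr_gt0; lra.
Qed.

Lemma Fge0 v : 0 <= Fobj A y lam q v.
Proof. H.
rewrite /Fobj; apply: addr_ge0.
  apply: divr_ge0 => //; apply: sumr_ge0 => k _; exact: sqr_ge0.
apply: mulr_ge0; first lra.
apply: sumr_ge0 => j _; exact: powR_ge0.
Qed.

Lemma stepn (hN : (0 < N)%N) n : exists t,
  Fobj A y lam q (x n.+1) + dl * t ^+ 2 <= Fobj A y lam q (x n) /\ `|x n.+1 - x n| <= `|t|.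
Proof.
set i := Ordinal (ltn_pmod n hN).
exists (x n.+1 i 0 - x n i 0); split.
  apply: step => //.
    move=> j ji; apply: (proj2 (hG n j)) => hj; move: ji; rewrite /eq_op /= hj.
    by rewrite eqxx.
  by apply: gprox; apply: (proj1 (hG n i)).
rewrite [X in X <= _]/Num.norm /= mx_normrE.
apply: bigmax_le => // -[j k] _ /=; rewrite !mxE (ord1 k).
case: (eqVneq j i) => [->|ji] //.
rewrite (proj2 (hG n j)); first by rewrite subrr normr0.
by move=> hj; move: ji; rewrite /eq_op /= hj eqxx.
Qed.

Theorem main_props : exists M, (forall n i j, `|x n i j| <= M) /\
  (forall e, 0 < e -> exists K, forall n, (K <= n)%N -> `|x n.+1 - x n| < e).
Proof. H.
case: (posnP N) => hN.
  exists 0; split.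
    by move=> n [i hi]; exfalso; move: hi; rewrite hN.
  move=> e e0; exists 0%N => n _.
  suff -> : x n.+1 - x n = 0 by rewrite normr0.
  by apply/matrixP => -[i hi]; exfalso; move: hi; rewrite hN.
have [tt htt] := choice (stepn hN).
set F0 := Fobj A y lam q (x 0%N).
have dec : forall n, Fobj A y lam q (x n) <= F0.
  elim=> [|n IH]; first exact: lexx.
  apply: le_trans IH; have [h _] := htt n.
  have : 0 <= dl * tt n ^+ 2 by apply: mulr_ge0; [exact/ltW/dl_gt0|exact: sqr_ge0].
  lra.
exists ((F0 / lam) `^ (1 / q)); split.
  move=> n i j; rewrite (ord1 j).
  have h1 : lam * penal q (x n i 0) <= F0.
    apply: le_trans (dec n); rewrite /Fobj.
    have hs : 0 <= (\sum_k res A y (x n) k ^+ 2) / 2.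
      apply: divr_ge0 => //; apply: sumr_ge0 => k _; exact: sqr_ge0.
    have hp : penal q (x n i 0) <= \sum_j penal q (x n j 0).
      rewrite (bigD1 i) //= lerDl; apply: sumr_ge0 => k _; exact: powR_ge0.
    have : lam * penal q (x n i 0) <= lam * \sum_j penal q (x n j 0) by apply: ler_wpM2l => //; lra.
    lra.
  have h2 : `|x n i 0| `^ q <= F0 / lam.
    by rewrite ler_pdivlMr // mulrC.
  have := @ge0_ler_powR R (1 / q) (ltW (divr_gt0 ltr01 hq0)) (`|x n i 0| `^ q) (F0 / lam).
  rewrite -powRrM (_ : q * (1 / q) = 1); last by field; rewrite gt_eqF.
  rewrite powRr1 //; apply; rewrite ?nnegrE ?powR_ge0 //.
  exact: le_trans (powR_ge0 _ _) h2.
set u := fun k => dl * tt k ^+ 2.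
have u0 : forall k, 0 <= u k by move=> k; apply: mulr_ge0; [exact/ltW/dl_gt0|exact: sqr_ge0].
have ps : forall n, series u n <= F0 - Fobj A y lam q (x n).
  elim=> [|n IH]; first by rewrite /series /= big_geq // subrr.
  rewrite /series /= big_nat_recr //=; rewrite /series /= in IH.
  have [h _] := htt n.
  rewrite /u; rewrite /u in IH; lra.
have cs : cvgn (series u).
  apply: nondecreasing_is_cvgn.
    by apply/nondecreasing_seqP => n; rewrite /series /= big_nat_recr //= lerDl.
  exists F0 => _ [n _ <-]; have := ps n; have := Fge0 (x n); lra.
have /cvgrPdist_lt cu := cvg_series_cvg_0 cs.
move=> e e0.
have de : 0 < dl * e ^+ 2 by apply: mulr_gt0; [exact: dl_gt0|exact: exprn_gt0].
have /ev [K hK] := cu _ de.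
exists K => n hn.
have h := hK n hn; rewrite sub0r normrN ger0_norm ?u0 // /u in h.
have [_ hn'] := htt n.
apply: le_lt_trans hn' _.
rewrite ltNge; apply/negP => hle.
have : e ^+ 2 <= `|tt n| ^+ 2 by rewrite lerXn2r // ?nnegrE ?(ltW e0).
rewrite real_normK ?num_real // => h3.
have : dl * e ^+ 2 <= dl * tt n ^+ 2 by apply: ler_wpM2l => //; exact/ltW/dl_gt0.
lra.
Qed.

End Main.

Theorem theorem1 (R : realType) (m N : nat) (A : 'M[R]_(m, N)) (y : 'cV[R]_m)
  (lam q mu : R) (x : nat -> 'cV[R]_N) :
  0 < lam -> 0 < q -> q < 1 ->
  0 < mu -> mu * Lmax A < 1 ->
  is_GAITA A y lam q mu x ->
  (exists phi : nat -> nat, (forall n, (phi n < phi n.+1)%N) /\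
                            cvg ((x \o phi) @ \oo)) /\
  closed (limit_points x) /\ connected (limit_points x).
Proof.
move=> hl hq0 hq1 hmu hL hG.
have [M [hM hs]] := @main_props R m N A y lam q mu x hl hq0 hq1 hmu hL hG.
split; last by split; [exact: LP_closed | exact: (@conn R N x M hM hs)].
have [p hp] := @BW R N x M hM.
have [phi [hinc hc]] := @FN_LP R N x p hp.
by exists phi; split => //; exact: cvgP hc.
Qed.
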